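(* If a Banach space $Y$ contains a strictly convex $2$-dimensional subspace, then there exists a uniformly convex Banach space $X$ such that the pair $(X,Y)$ fails the uniform sBPBp.
   Context: Scalars $\mathbb{K}=\mathbb{R}$ or $\mathbb{C}$; $S_X$ is the unit sphere of $X$, $\mathcal{L}(X,Y)$ the bounded linear operators. A pair of Banach spaces $(X,Y)$ has the uniform strong Bishop–Phelps–Bollobás property (uniform sBPBp) if for every $\varepsilon>0$ there exists $\eta(\varepsilon)>0$ such that whenever $T\in\mathcal{L}(X,Y)$ with $\|T\|=1$ and $x_0\in S_X$ satisfy $\|T(x_0)\|>1-\eta(\varepsilon)$, there exists $x_1\in S_X$ with $\|T(x_1)\|=1$ and $\|x_1-x_0\|<\varepsilon$. *)

(* Defs.v *)
From Stdlib Require Import Reals.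
Open Scope R_scope.

Inductive scalar_kind : Type := RealScalars | ComplexScalars.

Definition scal (k : scalar_kind) : Type :=
  match k with RealScalars => R | ComplexScalars => (R * R)%type end.

Definition s_zero (k : scalar_kind) : scal k :=
  match k return scal k with RealScalars => 0 | ComplexScalars => (0, 0) end.
Definition s_one (k : scalar_kind) : scal k :=
  match k return scal k with RealScalars => 1 | ComplexScalars => (1, 0) end.
Definition s_add (k : scalar_kind) : scal k -> scal k -> scal k :=
  match k return scal k -> scal k -> scal k with
  | RealScalars => Rplus
  | ComplexScalars => fun a b => (fst a + fst b, snd a + snd b)
  end.
Definition s_mul (k : scalar_kind) : scal k -> scal k -> scal k :=
  match k return scal k -> scal k -> scal k with
  | RealScalars => Rmult
  | ComplexScalars => fun a b =>
      (fst a * fst b - snd a * snd b, fst a * snd b + snd a * fst b)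
  end.
Definition s_abs (k : scalar_kind) : scal k -> R :=
  match k return scal k -> R with
  | RealScalars => Rabs
  | ComplexScalars => fun a => sqrt (fst a * fst a + snd a * snd a)
  end.
Definition s_of_R (k : scalar_kind) : R -> scal k :=
  match k return R -> scal k with
  | RealScalars => fun r => r
  | ComplexScalars => fun r => (r, 0)
  end.

Record NormedSpace (k : scalar_kind) : Type := {
  V :> Type;
  vzero : V;
  vadd : V -> V -> V;
  vopp : V -> V;
  vscale : scal k -> V -> V;
  vnorm : V -> R;
  vadd_assoc : forall x y z, vadd x (vadd y z) = vadd (vadd x y) z;
  vadd_comm : forall x y, vadd x y = vadd y x;
  vadd_zero : forall x, vadd x vzero = x;
  vadd_opp : forall x, vadd x (vopp x) = vzero;
  vscale_one : forall x, vscale (s_one k) x = x;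
  vscale_assoc : forall a b x, vscale a (vscale b x) = vscale (s_mul k a b) x;
  vscale_addv : forall a x y, vscale a (vadd x y) = vadd (vscale a x) (vscale a y);
  vscale_adds : forall a b x, vscale (s_add k a b) x = vadd (vscale a x) (vscale b x);
  vnorm_zero_iff : forall x, vnorm x = 0 <-> x = vzero;
  vnorm_scale : forall a x, vnorm (vscale a x) = s_abs k a * vnorm x;
  vnorm_triangle : forall x y, vnorm (vadd x y) <= vnorm x + vnorm y
}.

Arguments vzero {k} _.
Arguments vadd {k _}.
Arguments vopp {k _}.
Arguments vscale {k _}.
Arguments vnorm {k _}.

Definition vsub {k} {X : NormedSpace k} (x y : X) : X := vadd x (vopp y).

Definition complete {k} (X : NormedSpace k) : Prop :=
  forall u : nat -> X,
    (forall eps, eps > 0 -> exists N, forall m n, (m >= N)%nat -> (n >= N)%nat ->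
        vnorm (vsub (u m) (u n)) < eps) ->
    exists l : X, forall eps, eps > 0 -> exists N, forall n, (n >= N)%nat ->
        vnorm (vsub (u n) l) < eps.

Record BanachSpace (k : scalar_kind) : Type := {
  bs_space :> NormedSpace k;
  bs_complete : complete bs_space
}.

Definition in_sphere {k} {X : NormedSpace k} (x : X) : Prop := vnorm x = 1.

Definition is_linear {k} {X Y : NormedSpace k} (T : X -> Y) : Prop :=
  (forall x y, T (vadd x y) = vadd (T x) (T y)) /\
  (forall a x, T (vscale a x) = vscale a (T x)).

Definition is_bounded {k} {X Y : NormedSpace k} (T : X -> Y) : Prop :=
  exists M, forall x, vnorm (T x) <= M * vnorm x.

Definition bounded_linear {k} {X Y : NormedSpace k} (T : X -> Y) : Prop :=
  is_linear T /\ is_bounded T.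

(** ||T|| = 1, i.e. sup_{x in S_X} ||T x|| = 1 (unfolded). *)
Definition op_norm_one {k} {X Y : NormedSpace k} (T : X -> Y) : Prop :=
  (forall x : X, in_sphere x -> vnorm (T x) <= 1) /\
  (forall d, d > 0 -> exists x : X, in_sphere x /\ vnorm (T x) > 1 - d).

Definition uniform_sBPBp {k} (X Y : NormedSpace k) : Prop :=
  exists eta : R -> R,
  forall eps, eps > 0 ->
    eta eps > 0 /\
    forall (T : X -> Y) (x0 : X),
      bounded_linear T -> op_norm_one T -> in_sphere x0 ->
      vnorm (T x0) > 1 - eta eps ->
      exists x1 : X, in_sphere x1 /\ vnorm (T x1) = 1 /\ vnorm (vsub x1 x0) < eps.

Definition uniformly_convex {k} (X : NormedSpace k) : Prop :=
  forall eps, eps > 0 -> exists delta, delta > 0 /\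
    forall x y : X, vnorm x <= 1 -> vnorm y <= 1 -> vnorm (vsub x y) >= eps ->
      vnorm (vscale (s_of_R k (1/2)) (vadd x y)) <= 1 - delta.

Definition in_span2 {k} {X : NormedSpace k} (u v x : X) : Prop :=
  exists a b : scal k, x = vadd (vscale a u) (vscale b v).

Definition has_strictly_convex_2dim_subspace {k} (Y : NormedSpace k) : Prop :=
  exists u v : Y,
    (forall a b : scal k, vadd (vscale a u) (vscale b v) = vzero Y ->
        a = s_zero k /\ b = s_zero k) /\
    (forall x y : Y, in_span2 u v x -> in_span2 u v y ->
        in_sphere x -> in_sphere y -> x <> y ->
        vnorm (vscale (s_of_R k (1/2)) (vadd x y)) < 1).

(* Main.v *)
Require Import Defs.
From Stdlib Require Import Reals Lra Psatz Lia Classical ClassicalEpsilon.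
Require Coquelicot.Complex.
Open Scope R_scope.


Definition s_opp (k : scalar_kind) : scal k -> scal k :=
  match k return scal k -> scal k with
  | RealScalars => Ropp
  | ComplexScalars => fun a => (- fst a, - snd a)
  end.
Definition s_inv (k : scalar_kind) : scal k -> scal k :=
  match k return scal k -> scal k with
  | RealScalars => Rinv
  | ComplexScalars => fun a => Complex.Cinv a
  end.

Ltac sk k := destruct k; simpl in *;
  repeat match goal with
  | a : (R * R)%type |- _ => destruct a
  end; simpl in *.

Section Scal.
Variable k : scalar_kind.
Lemma sA_comm (a b : scal k) : s_add k a b = s_add k b a.
Proof. sk k; [ring| f_equal; ring]. Qed.
Lemma sA_assoc (a b c : scal k) : s_add k a (s_add k b c) = s_add k (s_add k a b) c.
Proof. sk k; [ring| f_equal; ring]. Qed.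
Lemma sA_0r (a : scal k) : s_add k a (s_zero k) = a.
Proof. sk k; [ring| f_equal; ring]. Qed.
Lemma sA_0l (a : scal k) : s_add k (s_zero k) a = a.
Proof. sk k; [ring| f_equal; ring]. Qed.
Lemma sA_opp (a : scal k) : s_add k a (s_opp k a) = s_zero k.
Proof. sk k; [ring| f_equal; ring]. Qed.
Lemma sM_comm (a b : scal k) : s_mul k a b = s_mul k b a.
Proof. sk k; [ring| f_equal; ring]. Qed.
Lemma sM_assoc (a b c : scal k) : s_mul k a (s_mul k b c) = s_mul k (s_mul k a b) c.
Proof. sk k; [ring| f_equal; ring]. Qed.
Lemma sM_1l (a : scal k) : s_mul k (s_one k) a = a.
Proof. sk k; [ring| f_equal; ring]. Qed.
Lemma sM_1r (a : scal k) : s_mul k a (s_one k) = a.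
Proof. sk k; [ring| f_equal; ring]. Qed.
Lemma sM_0l (a : scal k) : s_mul k (s_zero k) a = s_zero k.
Proof. sk k; [ring| f_equal; ring]. Qed.
Lemma sM_0r (a : scal k) : s_mul k a (s_zero k) = s_zero k.
Proof. sk k; [ring| f_equal; ring]. Qed.
Lemma sM_Dl (a b c : scal k) : s_mul k a (s_add k b c) = s_add k (s_mul k a b) (s_mul k a c).
Proof. sk k; [ring| f_equal; ring]. Qed.
Lemma sM_Dr (a b c : scal k) : s_mul k (s_add k a b) c = s_add k (s_mul k a c) (s_mul k b c).
Proof. sk k; [ring| f_equal; ring]. Qed.
Lemma sR_mul (r r' : R) : s_mul k (s_of_R k r) (s_of_R k r') = s_of_R k (r * r').
Proof. sk k; [ring| f_equal; ring]. Qed.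
Lemma sR_add (r r' : R) : s_add k (s_of_R k r) (s_of_R k r') = s_of_R k (r + r').
Proof. sk k; [ring| f_equal; ring]. Qed.
Lemma sR_1 : s_of_R k 1 = s_one k.
Proof. sk k; reflexivity. Qed.
Lemma sR_0 : s_of_R k 0 = s_zero k.
Proof. sk k; reflexivity. Qed.
Lemma sR_opp (r : R) : s_opp k (s_of_R k r) = s_of_R k (- r).
Proof. sk k; [ring| f_equal; ring]. Qed.
Lemma s_opp_mul (a : scal k) : s_opp k a = s_mul k (s_of_R k (-1)) a.
Proof. sk k; [ring| f_equal; ring]. Qed.

Lemma cmod_eq (x y : R) : sqrt (x * x + y * y) = Complex.Cmod (x, y).
Proof. unfold Complex.Cmod; simpl; f_equal; ring. Qed.

Lemma s_abs_nonneg (a : scal k) : 0 <= s_abs k a.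
Proof. sk k. apply Rabs_pos. apply sqrt_pos. Qed.
Lemma s_abs_mul (a b : scal k) : s_abs k (s_mul k a b) = s_abs k a * s_abs k b.
Proof. destruct k; simpl. apply Rabs_mult. destruct a as [x y], b as [z w]; simpl.
  rewrite !cmod_eq. exact (Complex.Cmod_mult (x,y) (z,w)). Qed.
Lemma s_abs_tri (a b : scal k) : s_abs k (s_add k a b) <= s_abs k a + s_abs k b.
Proof. destruct k; simpl. apply Rabs_triang. destruct a as [x y], b as [z w]; simpl.
  rewrite !cmod_eq. exact (Complex.Cmod_triangle (x,y) (z,w)). Qed.
Lemma s_abs_eq0 (a : scal k) : s_abs k a = 0 -> a = s_zero k.
Proof. destruct k; simpl. intro H. destruct (Req_dec a 0); auto. exfalso; apply Rabs_no_R0 in H0; auto.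
  destruct a as [x y]; simpl. rewrite cmod_eq. intro H. apply Complex.Cmod_eq_0 in H. exact H. Qed.
Lemma s_abs_R (r : R) : s_abs k (s_of_R k r) = Rabs r.
Proof. sk k. reflexivity. rewrite cmod_eq. apply Complex.Cmod_R. Qed.
Lemma s_abs_0 : s_abs k (s_zero k) = 0.
Proof. rewrite <- sR_0, s_abs_R. apply Rabs_R0. Qed.
Lemma s_abs_1 : s_abs k (s_one k) = 1.
Proof. rewrite <- sR_1, s_abs_R. apply Rabs_R1. Qed.
Lemma s_abs_opp (a : scal k) : s_abs k (s_opp k a) = s_abs k a.
Proof. rewrite s_opp_mul, s_abs_mul, s_abs_R. replace (-1) with (- (1)) by ring. rewrite Rabs_Ropp, Rabs_R1; ring. Qed.
Lemma s_inv_r (a : scal k) : a <> s_zero k -> s_mul k a (s_inv k a) = s_one k.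
Proof. sk k. intro; field; auto.
  intro H. apply (Complex.Cinv_r (r, r0)). exact H. Qed.
End Scal.

Section NS.
Variable k : scalar_kind.
Variable X : NormedSpace k.

Lemma vadd_0l (x : X) : vadd (vzero X) x = x.
Proof. rewrite vadd_comm. apply vadd_zero. Qed.

Lemma vdouble0 (y : X) : y = vadd y y -> y = vzero X.
Proof. intro H. rewrite <- (vadd_opp _ _ y). rewrite H at 2.
  rewrite <- vadd_assoc, vadd_opp, vadd_zero. reflexivity. Qed.

Lemma vscale_0s (x : X) : vscale (s_zero k) x = vzero X.
Proof. apply vdouble0. rewrite <- vscale_adds, sA_0r. reflexivity. Qed.

Lemma vscale_v0 (a : scal k) : vscale a (vzero X) = vzero X.
Proof. apply vdouble0. rewrite <- vscale_addv, vadd_zero. reflexivity. Qed.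

Lemma vopp_uniq (x y : X) : vadd x y = vzero X -> y = vopp x.
Proof. intro H. rewrite <- (vadd_zero _ _ y), <- (vadd_opp _ _ x), vadd_assoc.
  rewrite (vadd_comm _ _ y x), H, vadd_0l. reflexivity. Qed.

Lemma vopp_scale (x : X) : vopp x = vscale (s_of_R k (-1)) x.
Proof. symmetry. apply vopp_uniq. rewrite <- (vscale_one _ _ x) at 1.
  rewrite <- vscale_adds, <- sR_1, sR_add. replace (1 + -1) with 0 by ring.
  rewrite sR_0. apply vscale_0s. Qed.

Lemma vnorm_0 : vnorm (vzero X) = 0.
Proof. apply vnorm_zero_iff. reflexivity. Qed.

Lemma vnorm_opp (x : X) : vnorm (vopp x) = vnorm x.
Proof. rewrite vopp_scale, vnorm_scale, s_abs_R.
  replace (-1) with (- (1)) by ring. rewrite Rabs_Ropp, Rabs_R1; ring. Qed.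

Lemma vnorm_nonneg (x : X) : 0 <= vnorm x.
Proof. pose proof (vnorm_triangle _ _ x (vopp x)). rewrite vadd_opp, vnorm_0, vnorm_opp in H.
  lra. Qed.

Lemma vnorm_sR (r : R) (x : X) : vnorm (vscale (s_of_R k r) x) = Rabs r * vnorm x.
Proof. rewrite vnorm_scale, s_abs_R. reflexivity. Qed.

Lemma vadd_swap (a b c d : X) : vadd (vadd a b) (vadd c d) = vadd (vadd a c) (vadd b d).
Proof. rewrite <- !vadd_assoc. f_equal. rewrite !vadd_assoc. f_equal. apply vadd_comm. Qed.

Lemma vsub_chain (x y z : X) : vadd (vsub x y) (vsub y z) = vsub x z.
Proof. unfold vsub. rewrite <- vadd_assoc. f_equal. rewrite vadd_assoc.
  rewrite (vadd_comm _ _ (vopp y) y), vadd_opp, vadd_0l. reflexivity. Qed.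

Lemma vsub_self (x : X) : vsub x x = vzero X.
Proof. apply vadd_opp. Qed.

Lemma vsub_tri (x y z : X) : vnorm (vsub x z) <= vnorm (vsub x y) + vnorm (vsub y z).
Proof. rewrite <- (vsub_chain x y z). apply vnorm_triangle. Qed.

Lemma vsub_opp (x y : X) : vopp (vsub x y) = vsub y x.
Proof. symmetry. apply vopp_uniq. rewrite vsub_chain. apply vsub_self. Qed.

Lemma vsub_comm_norm (x y : X) : vnorm (vsub x y) = vnorm (vsub y x).
Proof. rewrite <- vsub_opp, vnorm_opp. reflexivity. Qed.

Lemma vsub_0 (x : X) : vsub x (vzero X) = x.
Proof. unfold vsub. rewrite vopp_scale, vscale_v0. apply vadd_zero. Qed.

Lemma vnorm_rev (x y : X) : vnorm x <= vnorm y + vnorm (vsub x y).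
Proof. pose proof (vsub_tri x y (vzero X)). rewrite !vsub_0 in H.
  lra. Qed.

Lemma vopp_vscale (c : scal k) (w : X) : vopp (vscale c w) = vscale c (vopp w).
Proof. rewrite !vopp_scale, !vscale_assoc, sM_comm. reflexivity. Qed.

Lemma vopp_add (x y : X) : vopp (vadd x y) = vadd (vopp x) (vopp y).
Proof. rewrite !vopp_scale. apply vscale_addv. Qed.

Definition vmid (x y : X) : X := vscale (s_of_R k (1/2)) (vadd x y).

Lemma vmid_sub (x y x' y' : X) :
  vsub (vmid x y) (vmid x' y') = vscale (s_of_R k (1/2)) (vadd (vsub x x') (vsub y y')).
Proof. unfold vmid, vsub. rewrite vopp_vscale, <- vscale_addv. f_equal.
  rewrite vopp_add. apply vadd_swap. Qed.

Lemma vmid_cont (x y x' y' : X) :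
  vnorm (vsub (vmid x y) (vmid x' y')) <= / 2 * (vnorm (vsub x x') + vnorm (vsub y y')).
Proof. rewrite vmid_sub, vnorm_sR. rewrite Rabs_right by lra.
  pose proof (vnorm_triangle _ _ (vsub x x') (vsub y y')). lra. Qed.

Lemma vmid_le (x y : X) : vnorm (vmid x y) <= / 2 * (vnorm x + vnorm y).
Proof. unfold vmid. rewrite vnorm_sR. rewrite Rabs_right by lra.
  pose proof (vnorm_triangle _ _ x y). lra. Qed.

Section Lin.
Variables e1 e2 : X.
Definition lin (a b : scal k) : X := vadd (vscale a e1) (vscale b e2).

Lemma lin_add a b c d : vadd (lin a b) (lin c d) = lin (s_add k a c) (s_add k b d).
Proof. unfold lin. rewrite vadd_swap, !vscale_adds. reflexivity. Qed.

Lemma lin_scale c a b : vscale c (lin a b) = lin (s_mul k c a) (s_mul k c b).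
Proof. unfold lin. rewrite vscale_addv, !vscale_assoc. reflexivity. Qed.

Lemma lin_opp a b : vopp (lin a b) = lin (s_opp k a) (s_opp k b).
Proof. rewrite vopp_scale, lin_scale, !(s_opp_mul k). reflexivity. Qed.

Lemma lin_00 : lin (s_zero k) (s_zero k) = vzero X.
Proof. unfold lin. rewrite !vscale_0s, vadd_zero. reflexivity. Qed.

Lemma lin_a0 a : lin a (s_zero k) = vscale a e1.
Proof. unfold lin. rewrite vscale_0s, vadd_zero. reflexivity. Qed.

Lemma lin_0b b : lin (s_zero k) b = vscale b e2.
Proof. unfold lin. rewrite vscale_0s, vadd_0l. reflexivity. Qed.

Lemma lin_sub a b c d : vsub (lin a b) (lin c d) = lin (s_add k a (s_opp k c)) (s_add k b (s_opp k d)).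
Proof. unfold vsub. rewrite lin_opp, lin_add. reflexivity. Qed.
End Lin.
End NS.

Section Build.
Variable k : scalar_kind.
Variable Y : NormedSpace k.
Variables e1 e2 : Y.
Hypothesis Hind : forall a b, lin k Y e1 e2 a b = vzero Y -> a = s_zero k /\ b = s_zero k.

Definition XV := (scal k * scal k)%type.
Definition xzero : XV := (s_zero k, s_zero k).
Definition xadd (x y : XV) : XV := (s_add k (fst x) (fst y), s_add k (snd x) (snd y)).
Definition xopp (x : XV) : XV := (s_opp k (fst x), s_opp k (snd x)).
Definition xscale (c : scal k) (x : XV) : XV := (s_mul k c (fst x), s_mul k c (snd x)).
Definition xnorm (x : XV) : R := vnorm (lin k Y e1 e2 (fst x) (snd x)).

Lemma x_assoc x y z : xadd x (xadd y z) = xadd (xadd x y) z.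
Proof. unfold xadd; simpl; f_equal; apply sA_assoc. Qed.
Lemma x_comm x y : xadd x y = xadd y x.
Proof. unfold xadd; simpl; f_equal; apply sA_comm. Qed.
Lemma x_zero x : xadd x xzero = x.
Proof. destruct x; unfold xadd; simpl; f_equal; apply sA_0r. Qed.
Lemma x_opp x : xadd x (xopp x) = xzero.
Proof. unfold xadd, xzero; simpl; f_equal; apply sA_opp. Qed.
Lemma x_one x : xscale (s_one k) x = x.
Proof. destruct x; unfold xscale; simpl; f_equal; apply sM_1l. Qed.
Lemma x_sassoc a b x : xscale a (xscale b x) = xscale (s_mul k a b) x.
Proof. unfold xscale; simpl; f_equal; apply sM_assoc. Qed.
Lemma x_addv a x y : xscale a (xadd x y) = xadd (xscale a x) (xscale a y).
Proof. unfold xscale, xadd; simpl; f_equal; apply sM_Dl. Qed.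
Lemma x_adds a b x : xscale (s_add k a b) x = xadd (xscale a x) (xscale b x).
Proof. unfold xscale, xadd; simpl; f_equal; apply sM_Dr. Qed.
Lemma x_nz x : xnorm x = 0 <-> x = xzero.
Proof. destruct x as [a b]. unfold xnorm, xzero; simpl. split.
  - intro H. apply vnorm_zero_iff in H. apply Hind in H. destruct H; subst; reflexivity.
  - intro H. inversion H; subst. rewrite lin_00. apply vnorm_0. Qed.
Lemma x_nscale a x : xnorm (xscale a x) = s_abs k a * xnorm x.
Proof. unfold xnorm, xscale; simpl. rewrite <- lin_scale. apply vnorm_scale. Qed.
Lemma x_tri x y : xnorm (xadd x y) <= xnorm x + xnorm y.
Proof. unfold xnorm, xadd; simpl. rewrite <- lin_add. apply vnorm_triangle. Qed.

Definition XNS : NormedSpace k :=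
  Build_NormedSpace k XV xzero xadd xopp xscale xnorm x_assoc x_comm x_zero x_opp
    x_one x_sassoc x_addv x_adds x_nz x_nscale x_tri.
End Build.

Definition incr (phi : nat -> nat) := forall n, (phi n < phi (S n))%nat.

Lemma incr_ge phi : incr phi -> forall n, (n <= phi n)%nat.
Proof. intros H n; induction n; [lia|]. specialize (H n). lia. Qed.

Lemma incr_mono phi : incr phi -> forall n m, (n <= m)%nat -> (phi n <= phi m)%nat.
Proof. intros H n m Hnm; induction Hnm; [lia|]. specialize (H m). lia. Qed.

Lemma incr_comp phi psi : incr phi -> incr psi -> incr (fun n => phi (psi n)).
Proof. intros H1 H2 n. pose proof (H2 n).
  assert (phi (S (psi n)) <= phi (psi (S n)))%nat by (apply incr_mono; auto).
  specialize (H1 (psi n)). lia. Qed.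

Lemma inv_small eps : eps > 0 -> exists N : nat, / (INR N + 1) < eps.
Proof. intro H. destruct (archimed_cor1 eps H) as [N [H1 H2]]. exists N.
  apply Rle_lt_trans with (/ INR N); auto. apply Rinv_le_contravar.
  apply lt_0_INR; auto. lra. Qed.

Lemma BW_R (u : nat -> R) (M : R) : (forall n, Rabs (u n) <= M) ->
  exists phi l, incr phi /\ forall eps, eps > 0 -> exists N, forall n, (n >= N)%nat ->
    Rabs (u (phi n) - l) < eps.
Proof.
  intro HM.
  destruct (Bolzano_Weierstrass u (fun c => -M <= c <= M) (compact_P3 (-M) M)) as [l Hl].
  { intro n. specialize (HM n). unfold Rabs in HM; destruct (Rcase_abs (u n)); lra. }
  assert (Hc : forall N m : nat, {p : nat | (N <= p)%nat /\ Rabs (u p - l) < / (INR m + 1)}).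
  { intros N m. apply constructive_indefinite_description.
    assert (Hpos : 0 < / (INR m + 1)). { apply Rinv_0_lt_compat. pose proof (pos_INR m); lra. }
    destruct (Hl (disc l (mkposreal _ Hpos)) N) as [p [Hp1 Hp2]].
    - exists (mkposreal _ Hpos). intros y Hy; exact Hy.
    - exists p. split; auto. }
  set (phi := fix phi n := match n with
     | O => proj1_sig (Hc O O)
     | S n' => proj1_sig (Hc (S (phi n')) (S n')) end).
  exists phi, l. split.
  - intro n. change (phi n < proj1_sig (Hc (S (phi n)) (S n)))%nat.
    destruct (proj2_sig (Hc (S (phi n)) (S n))) as [Hp _]. lia.
  - intros eps Heps. destruct (inv_small eps Heps) as [N HN]. exists N. intros n Hn.
    assert (Rabs (u (phi n) - l) < / (INR n + 1)).
    { destruct n.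
      - exact (proj2 (proj2_sig (Hc O O))).
      - exact (proj2 (proj2_sig (Hc (S (phi n)) (S n)))). }
    apply Rlt_le_trans with (/ (INR n + 1)); auto.
    apply Rle_trans with (/ (INR N + 1)); [|lra].
    apply Rinv_le_contravar. pose proof (pos_INR N); lra. apply le_INR in Hn. lra.
Qed.

Lemma sqrt_le_sum x y : sqrt (x * x + y * y) <= Rabs x + Rabs y.
Proof. rewrite <- (sqrt_square (Rabs x + Rabs y)).
  2: { pose proof (Rabs_pos x); pose proof (Rabs_pos y); lra. }
  apply sqrt_le_1_alt. pose proof (Rabs_pos x); pose proof (Rabs_pos y).
  assert (x * x = Rabs x * Rabs x) by (rewrite <- Rabs_mult; rewrite Rabs_right; [ring| nra]).
  assert (y * y = Rabs y * Rabs y) by (rewrite <- Rabs_mult; rewrite Rabs_right; [ring| nra]).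
  nra. Qed.

Lemma abs_le_sqrt x y : Rabs x <= sqrt (x * x + y * y).
Proof. rewrite <- sqrt_Rsqr_abs. apply sqrt_le_1_alt. unfold Rsqr. nra. Qed.

Lemma abs_le_sqrt2 x y : Rabs y <= sqrt (x * x + y * y).
Proof. rewrite <- sqrt_Rsqr_abs. apply sqrt_le_1_alt. unfold Rsqr. nra. Qed.

Lemma cvg_sub (u : nat -> R) l phi : incr phi ->
  (forall eps, eps > 0 -> exists N, forall n, (n >= N)%nat -> Rabs (u n - l) < eps) ->
  (forall eps, eps > 0 -> exists N, forall n, (n >= N)%nat -> Rabs (u (phi n) - l) < eps).
Proof. intros Hp H eps He. destruct (H eps He) as [N HN]. exists N. intros n Hn.
  apply HN. pose proof (incr_ge phi Hp n). lia. Qed.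

Lemma BW_K (k : scalar_kind) (t : nat -> scal k) (M : R) : (forall n, s_abs k (t n) <= M) ->
  exists phi l, incr phi /\ forall eps, eps > 0 -> exists N, forall n, (n >= N)%nat ->
    s_abs k (s_add k (t (phi n)) (s_opp k l)) < eps.
Proof.
  destruct k; simpl; intro HM.
  - destruct (BW_R t M HM) as [phi [l [H1 H2]]]. exists phi, l. split; auto.
  - destruct (BW_R (fun n => fst (t n)) M) as [phi [l1 [H1 H2]]].
    { intro n. eapply Rle_trans; [|apply HM]. apply abs_le_sqrt. }
    destruct (BW_R (fun n => snd (t (phi n))) M) as [psi [l2 [H3 H4]]].
    { intro n. eapply Rle_trans; [|apply HM]. apply abs_le_sqrt2. }
    exists (fun n => phi (psi n)), (l1, l2). split; [apply incr_comp; auto|].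
    intros eps He. destruct (cvg_sub _ _ psi H3 H2 (eps/2)) as [N1 HN1]; [lra|].
    destruct (H4 (eps/2)) as [N2 HN2]; [lra|].
    exists (max N1 N2). intros n Hn. simpl.
    eapply Rle_lt_trans; [apply sqrt_le_sum|].
    specialize (HN1 n ltac:(lia)). specialize (HN2 n ltac:(lia)). simpl in *.
    unfold Rminus in *. lra.
Qed.

Section Analysis.
Variable k : scalar_kind.
Variable Y : NormedSpace k.
Variables e1 e2 : Y.
Hypothesis Hind : forall a b, lin k Y e1 e2 a b = vzero Y -> a = s_zero k /\ b = s_zero k.
Hypothesis Hn1 : vnorm e1 = 1.
Hypothesis Hn2 : vnorm e2 = 1.
Hypothesis HB : forall s, 1 <= vnorm (vadd e1 (vscale s e2)).

Notation L := (lin k Y e1 e2).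
Notation X := (XNS k Y e1 e2 Hind).

Lemma birk a b : s_abs k a <= vnorm (L a b).
Proof.
  destruct (classic (a = s_zero k)) as [Ha|Ha].
  - subst. rewrite s_abs_0. apply vnorm_nonneg.
  - assert (E : L a b = vscale a (L (s_one k) (s_mul k (s_inv k a) b))).
    { rewrite lin_scale, sM_1r, sM_assoc, s_inv_r, sM_1l; auto. }
    rewrite E, vnorm_scale. unfold lin. rewrite vscale_one.
    pose proof (HB (s_mul k (s_inv k a) b)). pose proof (s_abs_nonneg k a). nra.
Qed.

Lemma lin_le a b : vnorm (L a b) <= s_abs k a + s_abs k b.
Proof. unfold lin. eapply Rle_trans; [apply vnorm_triangle|].
  rewrite !vnorm_scale, Hn1, Hn2. lra. Qed.

Lemma lin_a0_norm a : vnorm (L a (s_zero k)) = s_abs k a.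
Proof. rewrite lin_a0, vnorm_scale, Hn1. ring. Qed.

Lemma lin_0b_norm b : vnorm (L (s_zero k) b) = s_abs k b.
Proof. rewrite lin_0b, vnorm_scale, Hn2. ring. Qed.

Lemma snd_le a b : s_abs k b <= 2 * vnorm (L a b).
Proof.
  assert (E : vsub (L a b) (L a (s_zero k)) = L (s_zero k) b).
  { rewrite lin_sub, sA_opp. f_equal. rewrite <- sR_0, sR_opp, Ropp_0, sR_0. apply sA_0r. }
  rewrite <- lin_0b_norm, <- E. unfold vsub. eapply Rle_trans; [apply vnorm_triangle|].
  rewrite vnorm_opp, lin_a0_norm. pose proof (birk a b). lra.
Qed.

Lemma xnorm_def (x : X) : vnorm x = vnorm (L (fst x) (snd x)).
Proof. reflexivity. Qed.

Definition cvgX (s : nat -> X) (l : X) := forall eps, eps > 0 -> exists N, forall n, (n >= N)%nat ->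
  vnorm (vsub (s n) l) < eps.

Lemma BW_X (x : nat -> X) (M : R) : (forall n, vnorm (x n) <= M) ->
  exists phi l, incr phi /\ cvgX (fun n => x (phi n)) l.
Proof.
  intro HM.
  destruct (BW_K k (fun n => fst (x n)) M) as [phi [l1 [H1 H2]]].
  { intro n. apply Rle_trans with (vnorm (L (fst (x n)) (snd (x n)))); [apply birk|]. apply HM. }
  destruct (BW_K k (fun n => snd (x (phi n))) (2 * M)) as [psi [l2 [H3 H4]]].
  { intro n. apply Rle_trans with (2 * vnorm (L (fst (x (phi n))) (snd (x (phi n))))); [apply snd_le|].
    specialize (HM (phi n)). simpl in HM. unfold xnorm in HM. lra. }
  exists (fun n => phi (psi n)), (l1, l2). split; [apply incr_comp; auto|].
  intros eps He. destruct (H2 (eps/2)) as [N1 HN1]; [lra|].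
  destruct (H4 (eps/2)) as [N2 HN2]; [lra|].
  exists (max N1 N2). intros n Hn.
  rewrite xnorm_def. simpl. eapply Rle_lt_trans; [apply lin_le|].
  assert (psi n >= N1)%nat by (pose proof (incr_ge psi H3 n); lia).
  specialize (HN1 (psi n) H). specialize (HN2 n ltac:(lia)). simpl in *. lra.
Qed.

Lemma X_complete : complete X.
Proof.
  intros u Hc. destruct (Hc 1 Rlt_0_1) as [N0 HN0].
  destruct (BW_X (fun n => u (N0 + n)%nat) (vnorm (u N0) + 1)) as [psi [l [Hpsi Hcv]]].
  { intro n. pose proof (vnorm_rev _ _ (u (N0 + n)%nat) (u N0)).
    specialize (HN0 (N0 + n)%nat N0 ltac:(lia) ltac:(lia)). lra. }
  exists l. intros eps He. destruct (Hc (eps/2)) as [N1 HN1]; [lra|].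
  destruct (Hcv (eps/2)) as [N2 HN2]; [lra|].
  exists N1. intros n Hn. remember (max N1 N2) as m.
  assert (m >= N1 /\ m >= N2)%nat by lia.
  pose proof (incr_ge psi Hpsi m).
  eapply Rle_lt_trans; [apply (vsub_tri _ _ _ (u (N0 + psi m)%nat))|].
  specialize (HN1 n (N0 + psi m)%nat Hn ltac:(lia)). specialize (HN2 m ltac:(lia)). cbv beta in HN2. lra.
Qed.

Definition LX (x : X) : Y := L (fst x) (snd x).

Lemma LX_norm x : vnorm (LX x) = vnorm x.
Proof. reflexivity. Qed.

Lemma LX_sub x y : LX (vsub x y) = vsub (LX x) (LX y).
Proof. unfold LX. rewrite lin_sub. reflexivity. Qed.

Lemma LX_mid x y : LX (vmid k X x y) = vmid k Y (LX x) (LX y).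
Proof. unfold LX, vmid. rewrite lin_add, lin_scale. reflexivity. Qed.

Hypothesis HSC : forall x y : Y, in_span2 e1 e2 x -> in_span2 e1 e2 y -> in_sphere x -> in_sphere y ->
   x <> y -> vnorm (vscale (s_of_R k (1/2)) (vadd x y)) < 1.

Lemma cvgX_sub s l psi : incr psi -> cvgX s l -> cvgX (fun n => s (psi n)) l.
Proof. intros Hp H eps He. destruct (H eps He) as [N HN]. exists N. intros n Hn.
  apply HN. pose proof (incr_ge psi Hp n). lia. Qed.

Lemma X_uc : uniformly_convex X.
Proof.
  intros eps He. apply NNPP. intro Hno.
  assert (Hseq : forall n : nat, exists xy : X * X, vnorm (fst xy) <= 1 /\ vnorm (snd xy) <= 1 /\ vnorm (vsub (fst xy) (snd xy)) >= eps /\ vnorm (vmid k X (fst xy) (snd xy)) > 1 - / (INR n + 1)).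
  { intro n. apply NNPP; intro H. apply Hno. exists (/ (INR n + 1)). split.
    { apply Rinv_0_lt_compat. pose proof (pos_INR n); lra. }
    intros x y Hx Hy Hxy. apply Rnot_gt_le. intro Hgt. apply H. exists (x, y). simpl. auto. }
  set (s := fun n => proj1_sig (constructive_indefinite_description _ (Hseq n))).
  assert (Hs : forall n, vnorm (fst (s n)) <= 1 /\ vnorm (snd (s n)) <= 1 /\ vnorm (vsub (fst (s n)) (snd (s n))) >= eps /\ vnorm (vmid k X (fst (s n)) (snd (s n))) > 1 - / (INR n + 1)).
  { intro n. exact (proj2_sig (constructive_indefinite_description _ (Hseq n))). }
  clearbody s.
  destruct (BW_X (fun n => fst (s n)) 1) as [phi [lx [Hphi Hcx]]]. { intro n. apply Hs. }
  destruct (BW_X (fun n => snd (s (phi n))) 1) as [psi [ly [Hpsi Hcy]]]. { intro n. apply Hs. }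
  pose proof (cvgX_sub _ _ psi Hpsi Hcx) as Hcx'. cbv beta in Hcx'.
  assert (Ha : vnorm lx <= 1).
  { apply le_epsilon. intros e Hep. destruct (Hcx' e Hep) as [N HN]. specialize (HN N (le_n N)).
    pose proof (vnorm_rev _ _ lx (fst (s (phi (psi N))))). rewrite vsub_comm_norm in H.
    destruct (Hs (phi (psi N))) as [H1 _]. lra. }
  assert (Hb : vnorm ly <= 1).
  { apply le_epsilon. intros e Hep. destruct (Hcy e Hep) as [N HN]. specialize (HN N (le_n N)).
    pose proof (vnorm_rev _ _ ly (snd (s (phi (psi N))))). rewrite vsub_comm_norm in H.
    destruct (Hs (phi (psi N))) as [_ [H1 _]]. lra. }
  assert (Hc : eps <= vnorm (vsub lx ly)).
  { apply le_epsilon. intros e Hep. destruct (Hcx' (e/2)) as [N1 HN1]; [lra|].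
    destruct (Hcy (e/2)) as [N2 HN2]; [lra|]. remember (max N1 N2) as N. assert (N >= N1 /\ N >= N2)%nat by lia.
    specialize (HN1 N ltac:(lia)). specialize (HN2 N ltac:(lia)).
    destruct (Hs (phi (psi N))) as [_ [_ [H1 _]]].
    pose proof (vsub_tri _ _ (fst (s (phi (psi N)))) lx (snd (s (phi (psi N))))).
    pose proof (vsub_tri _ _ lx ly (snd (s (phi (psi N))))). cbv beta in HN2. rewrite vsub_comm_norm in HN2.
    cbv beta in *. lra. }
  assert (Hd : 1 <= vnorm (vmid k X lx ly)).
  { apply le_epsilon. intros e Hep. destruct (Hcx' (e/2)) as [N1 HN1]; [lra|].
    destruct (Hcy (e/2)) as [N2 HN2]; [lra|]. destruct (inv_small (e/2)) as [N3 HN3]; [lra|].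
    remember (max N1 (max N2 N3)) as N. assert (N >= N1 /\ N >= N2 /\ N >= N3)%nat by lia.
    specialize (HN1 N ltac:(lia)). specialize (HN2 N ltac:(lia)).
    destruct (Hs (phi (psi N))) as [_ [_ [_ H1]]].
    pose proof (vnorm_rev _ _ (vmid k X (fst (s (phi (psi N)))) (snd (s (phi (psi N))))) (vmid k X lx ly)).
    pose proof (vmid_cont _ _ (fst (s (phi (psi N)))) (snd (s (phi (psi N)))) lx ly).
    assert (/ (INR (phi (psi N)) + 1) <= / (INR N3 + 1)).
    { apply Rinv_le_contravar. pose proof (pos_INR N3); lra.
      assert (N3 <= phi (psi N))%nat.
      { pose proof (incr_ge psi Hpsi N). pose proof (incr_ge phi Hphi (psi N)). lia. }
      apply le_INR in H3. lra. }
    cbv beta in *. lra. }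
  pose proof (vmid_le _ _ lx ly).
  assert (Hx1 : vnorm lx = 1) by lra.
  assert (Hy1 : vnorm ly = 1) by lra.
  assert (Hne : LX lx <> LX ly).
  { intro E. assert (vnorm (vsub lx ly) = 0).
    { rewrite <- LX_norm, LX_sub, E, vsub_self. apply vnorm_0. }
    lra. }
  assert (Hlt := HSC (LX lx) (LX ly) ltac:(exists (fst lx), (snd lx); reflexivity)
     ltac:(exists (fst ly), (snd ly); reflexivity) Hx1 Hy1 Hne).
  change (vnorm (vmid k Y (LX lx) (LX ly)) < 1) in Hlt.
  rewrite <- LX_mid, LX_norm in Hlt. lra.
Qed.
End Analysis.

Ltac scal_ring k := repeat match goal with H : _ |- _ => clear H end; destruct k; simpl in *;
  [ try ring; try field | repeat match goal with p : (R * R)%type |- _ => destruct p end; simpl; f_equal; try ring; try field ].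

Section Ops.
Variable k : scalar_kind.
Variable Y : NormedSpace k.
Variables e1 e2 : Y.
Hypothesis Hind : forall a b, lin k Y e1 e2 a b = vzero Y -> a = s_zero k /\ b = s_zero k.
Hypothesis Hn1 : vnorm e1 = 1.
Hypothesis Hn2 : vnorm e2 = 1.
Hypothesis HB : forall s, 1 <= vnorm (vadd e1 (vscale s e2)).
Hypothesis HSC : forall x y : Y, in_span2 e1 e2 x -> in_span2 e1 e2 y -> in_sphere x -> in_sphere y ->
   x <> y -> vnorm (vscale (s_of_R k (1/2)) (vadd x y)) < 1.

Notation L := (lin k Y e1 e2).
Notation X := (XNS k Y e1 e2 Hind).

Definition Top (lam : R) (x : X) : Y := L (fst x) (s_mul k (s_of_R k (1 - lam)) (snd x)).

Lemma Top_lin lam : is_linear (Top lam).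
Proof. split.
  - intros x y. unfold Top. rewrite lin_add. f_equal. simpl. apply sM_Dl.
  - intros a x. unfold Top. rewrite lin_scale. simpl. f_equal.
    rewrite !sM_assoc, (sM_comm k a). reflexivity.
Qed.

Lemma Top_decomp lam a b : L a (s_mul k (s_of_R k (1 - lam)) b) =
  vadd (vscale (s_of_R k lam) (L a (s_zero k))) (vscale (s_of_R k (1 - lam)) (L a b)).
Proof. rewrite !lin_scale, lin_add. f_equal; scal_ring k. Qed.

Lemma Top_bound lam (x : X) : 0 <= lam <= 1 ->
  vnorm (Top lam x) <= lam * s_abs k (fst x) + (1 - lam) * vnorm x.
Proof. intro Hl. unfold Top. rewrite Top_decomp. eapply Rle_trans; [apply vnorm_triangle|].
  rewrite !vnorm_sR, lin_a0_norm by auto. rewrite !Rabs_right by lra.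
  rewrite xnorm_def. lra. Qed.

Lemma Top_le lam (x : X) : 0 <= lam <= 1 -> vnorm (Top lam x) <= vnorm x.
Proof. intro Hl. pose proof (Top_bound lam x Hl). pose proof (birk k Y e1 e2 HB (fst x) (snd x)).
  rewrite xnorm_def in *. nra. Qed.

Lemma Top_strict lam (x : X) : 0 < lam <= 1/2 -> vnorm x = 1 -> vnorm (Top lam x) = 1 ->
  snd x = s_zero k /\ s_abs k (fst x) = 1.
Proof.
  intros Hl Hx HT. destruct x as [a b]. simpl fst; simpl snd.
  pose proof (Top_bound lam (a, b) ltac:(lra)). simpl fst in H.
  pose proof (birk k Y e1 e2 HB a b). change (vnorm (L a b)) with (vnorm ((a, b) : X)) in H0.
  assert (Ha : s_abs k a = 1) by nra. split; auto.
  apply NNPP. intro Hb.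
  set (y1 := L a (s_zero k)). set (y2 := L a b).
  assert (Hy1 : vnorm y1 = 1) by (unfold y1; rewrite lin_a0_norm; auto).
  assert (Hy2 : vnorm y2 = 1) by exact Hx.
  assert (Hne : y1 <> y2).
  { intro E. assert (E2 : vsub y2 y1 = L (s_zero k) b).
    { unfold y1, y2. rewrite lin_sub, sA_opp. f_equal. scal_ring k. }
    rewrite E, vsub_self in E2. symmetry in E2. apply Hind in E2. tauto. }
  assert (Hm := HSC y1 y2 ltac:(exists a, (s_zero k); reflexivity) ltac:(exists a, b; reflexivity) Hy1 Hy2 Hne).
  assert (E : Top lam (a, b) = vadd (vscale (s_of_R k (2 * lam)) (vscale (s_of_R k (1/2)) (vadd y1 y2)))
      (vscale (s_of_R k (1 - 2 * lam)) y2)).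
  { unfold Top, y1, y2. simpl fst; simpl snd. rewrite lin_add, !lin_scale, lin_add. f_equal; scal_ring k. }
  assert (vnorm (Top lam (a, b)) < 1).
  { rewrite E. eapply Rle_lt_trans; [apply vnorm_triangle|]. rewrite !vnorm_sR.
    rewrite !Rabs_right by lra. rewrite Hy2. rewrite vnorm_sR, Rabs_right in Hm by lra. nra. }
  lra.
Qed.

Lemma fail_sBPBp : ~ uniform_sBPBp X Y.
Proof.
  intros [eta Heta]. destruct (Heta 1 Rlt_0_1) as [Hpos H].
  set (lam := Rmin (eta 1 / 2) (1/2)).
  assert (Hl : 0 < lam <= 1/2).
  { unfold lam. split. apply Rmin_glb_lt; lra. apply Rmin_r. }
  assert (Hl2 : lam < eta 1). { unfold lam. pose proof (Rmin_l (eta 1 / 2) (1/2)). lra. }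
  set (x0 := (s_zero k, s_one k) : X).
  assert (Hx0 : vnorm x0 = 1). { rewrite xnorm_def. simpl. rewrite lin_0b_norm by auto. apply s_abs_1. }
  destruct (H (Top lam) x0) as [x1 [Hs1 [HT1 Hd]]].
  - split; [apply Top_lin|]. exists 1. intro x. rewrite Rmult_1_l. apply Top_le. lra.
  - split.
    + intros x Hx. unfold in_sphere in Hx. rewrite <- Hx. apply Top_le. lra.
    + intros d Hd. exists ((s_one k, s_zero k) : X). split.
      * unfold in_sphere. rewrite xnorm_def. simpl. rewrite lin_a0_norm by auto. apply s_abs_1.
      * unfold Top. simpl. rewrite sM_0r, lin_a0_norm by auto. rewrite s_abs_1. lra.
  - exact Hx0.
  - unfold Top, x0. simpl. rewrite lin_0b_norm by auto. rewrite sM_1r, s_abs_R.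
    rewrite Rabs_right by lra. lra.
  - destruct (Top_strict lam x1 Hl Hs1 HT1) as [Hb Ha].
    destruct x1 as [a b]. simpl in Hb, Ha. subst b.
    change (vnorm (L (s_add k a (s_opp k (s_zero k))) (s_add k (s_zero k) (s_opp k (s_one k)))) < 1) in Hd.
    pose proof (birk k Y e1 e2 HB (s_add k a (s_opp k (s_zero k))) (s_add k (s_zero k) (s_opp k (s_one k)))).
    assert (Ea : s_add k a (s_opp k (s_zero k)) = a) by scal_ring k. rewrite Ea in H0, Hd.
    lra.
Qed.
End Ops.

Lemma s_sub0 k (b : scal k) : s_add k b (s_opp k (s_zero k)) = b.
Proof. scal_ring k. Qed.

Lemma s_one_nz k : s_one k <> s_zero k.
Proof. intro H. pose proof (s_abs_1 k). rewrite H, s_abs_0 in H0. lra. Qed.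

Lemma sc_HB k (n1 : R) (t s c2 : scal k) : n1 <> 0 ->
  s_add k (s_mul k (s_of_R k (1 / n1)) t) (s_mul k s c2) =
  s_mul k (s_of_R k (1 / n1)) (s_add k t (s_mul k (s_of_R k n1) (s_mul k s c2))).
Proof. intro H. destruct k; simpl. field; auto.
  destruct t, s, c2; simpl; f_equal; field; auto. Qed.

Section Reduce.
Variable k : scalar_kind.
Variable Y : NormedSpace k.
Variables u v : Y.
Hypothesis Hind : forall a b, lin k Y u v a b = vzero Y -> a = s_zero k /\ b = s_zero k.
Hypothesis HSC : forall x y : Y, in_span2 u v x -> in_span2 u v y -> in_sphere x -> in_sphere y ->
   x <> y -> vnorm (vscale (s_of_R k (1/2)) (vadd x y)) < 1.

Notation L := (lin k Y u v).
Definition fmin (t : scal k) := vnorm (L (s_one k) t).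

Lemma L0b_norm b : vnorm (L (s_zero k) b) = s_abs k b * vnorm v.
Proof. rewrite lin_0b. apply vnorm_scale. Qed.

Lemma v_pos : 0 < vnorm v.
Proof. destruct (vnorm_nonneg _ _ v) as [H|H]; auto. exfalso.
  symmetry in H. apply vnorm_zero_iff in H.
  assert (L (s_zero k) (s_one k) = vzero Y). { rewrite lin_0b, vscale_one. exact H. }
  apply Hind in H0. destruct H0. apply (s_one_nz k); auto. Qed.

Lemma fmin_lip t t' : fmin t <= fmin t' + s_abs k (s_add k t' (s_opp k t)) * vnorm v.
Proof. unfold fmin. pose proof (vnorm_rev _ _ (L (s_one k) t) (L (s_one k) t')).
  rewrite vsub_comm_norm, lin_sub, sA_opp, L0b_norm in H. exact H. Qed.

Lemma fmin_exists : exists ts, forall s, fmin ts <= fmin s.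
Proof.
  set (E := fun r => exists t, r = - fmin t).
  destruct (completeness E) as [m' [Hub Hlub]].
  { exists 0. intros r [t ->]. pose proof (vnorm_nonneg _ _ (L (s_one k) t)). unfold fmin. lra. }
  { exists (- fmin (s_zero k)). exists (s_zero k). reflexivity. }
  set (m := - m').
  assert (Hm : forall t, m <= fmin t). { intro t. assert (E (- fmin t)) by (exists t; auto).
    apply Hub in H. unfold m. lra. }
  assert (Happ : forall e, e > 0 -> exists t, fmin t < m + e).
  { intros e He. apply NNPP. intro Hn.
    assert (is_upper_bound E (m' - e)).
    { intros r [t ->]. apply Rnot_lt_le. intro H. apply Hn. exists t. unfold m. lra. }
    apply Hlub in H. lra. }
  assert (Hseq : forall n : nat, exists t, fmin t < m + / (INR n + 1)).
  { intro n. apply Happ. apply Rinv_0_lt_compat. pose proof (pos_INR n). lra. }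
  set (ts := fun n => proj1_sig (constructive_indefinite_description _ (Hseq n))).
  assert (Hts : forall n, fmin (ts n) < m + / (INR n + 1)).
  { intro n. exact (proj2_sig (constructive_indefinite_description _ (Hseq n))). }
  clearbody ts.
  pose proof v_pos as Hv.
  destruct (BW_K k ts ((m + 1 + vnorm u) / vnorm v)) as [phi [ts0 [Hphi Hcv]]].
  { intro n. apply Rmult_le_reg_r with (vnorm v); auto. unfold Rdiv. rewrite Rmult_assoc, Rinv_l by lra.
    rewrite Rmult_1_r. rewrite <- L0b_norm.
    pose proof (vnorm_rev _ _ (L (s_zero k) (ts n)) (L (s_one k) (ts n))).
    rewrite lin_sub, sA_opp, sA_0l, lin_a0, vnorm_scale, s_abs_opp, s_abs_1 in H.
    assert (vnorm (L (s_one k) (ts n)) < m + 1).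
    { specialize (Hts n). assert (/ (INR n + 1) <= 1).
      { rewrite <- Rinv_1. apply Rinv_le_contravar. lra. pose proof (pos_INR n). lra. }
      unfold fmin in Hts. lra. }
    lra. }
  exists ts0. intros s. eapply Rle_trans; [|apply Hm].
  apply le_epsilon. intros e He.
  destruct (Hcv (e / 2 / vnorm v)) as [N1 HN1].
  { apply Rdiv_lt_0_compat; lra. }
  destruct (inv_small (e/2)) as [N2 HN2]; [lra|].
  set (N := max N1 N2).
  specialize (HN1 N ltac:(unfold N; lia)).
  pose proof (fmin_lip ts0 (ts (phi N))).
  pose proof (Hts (phi N)).
  assert (/ (INR (phi N) + 1) <= / (INR N2 + 1)).
  { apply Rinv_le_contravar. pose proof (pos_INR N2); lra.
    assert (N2 <= phi N)%nat. { pose proof (incr_ge phi Hphi N). unfold N in *. lia. }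
    apply le_INR in H1. lra. }
  assert (s_abs k (s_add k (ts (phi N)) (s_opp k ts0)) * vnorm v < e / 2).
  { apply Rmult_lt_reg_r with (/ vnorm v). apply Rinv_0_lt_compat; auto.
    rewrite Rmult_assoc, Rinv_r, Rmult_1_r by lra. exact HN1. }
  lra.
Qed.

Lemma reduce : exists e1 e2 : Y,
  (forall a b, lin k Y e1 e2 a b = vzero Y -> a = s_zero k /\ b = s_zero k) /\
  vnorm e1 = 1 /\ vnorm e2 = 1 /\ (forall s, 1 <= vnorm (vadd e1 (vscale s e2))) /\
  (forall x y : Y, in_span2 e1 e2 x -> in_span2 e1 e2 y -> in_sphere x -> in_sphere y ->
   x <> y -> vnorm (vscale (s_of_R k (1/2)) (vadd x y)) < 1).
Proof.
  destruct fmin_exists as [ts Hmin].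
  pose proof v_pos as Hv.
  assert (Hn1 : 0 < fmin ts).
  { destruct (vnorm_nonneg _ _ (L (s_one k) ts)) as [H|H]; [exact H|]. exfalso.
    symmetry in H. apply vnorm_zero_iff, Hind in H. destruct H. apply (s_one_nz k); auto. }
  set (n1 := fmin ts) in *. set (n2 := vnorm v) in *.
  set (c1 := s_of_R k (1 / n1)). set (c2 := s_of_R k (1 / n2)).
  exists (L c1 (s_mul k c1 ts)), (L (s_zero k) c2).
  set (e1 := L c1 (s_mul k c1 ts)). set (e2 := L (s_zero k) c2).
  assert (Hcomp : forall a b, lin k Y e1 e2 a b =
     L (s_add k (s_mul k a c1) (s_mul k b (s_zero k))) (s_add k (s_mul k a (s_mul k c1 ts)) (s_mul k b c2))).
  { intros a b. change (vadd (vscale a e1) (vscale b e2) = L (s_add k (s_mul k a c1) (s_mul k b (s_zero k))) (s_add k (s_mul k a (s_mul k c1 ts)) (s_mul k b c2))).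
    unfold e1, e2. rewrite !lin_scale, lin_add. reflexivity. }
  assert (Hc1 : 0 < s_abs k c1). { unfold c1. rewrite s_abs_R, Rabs_right. apply Rdiv_lt_0_compat; lra.
    left; apply Rdiv_lt_0_compat; lra. }
  assert (Hc2 : 0 < s_abs k c2). { unfold c2. rewrite s_abs_R, Rabs_right. apply Rdiv_lt_0_compat; lra.
    left; apply Rdiv_lt_0_compat; lra. }
  split; [|split; [|split; [|split]]].
  - intros a b H. rewrite Hcomp in H. apply Hind in H. destruct H as [H1 H2].
    rewrite sM_0r, sA_0r in H1.
    assert (Ha : a = s_zero k).
    { apply s_abs_eq0. apply (f_equal (s_abs k)) in H1. rewrite s_abs_mul, s_abs_0 in H1.
      apply Rmult_integral in H1. destruct H1; [auto|lra]. }
    subst a. rewrite sM_0l, sA_0l in H2. split; auto.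
    apply s_abs_eq0. apply (f_equal (s_abs k)) in H2. rewrite s_abs_mul, s_abs_0 in H2.
    apply Rmult_integral in H2. destruct H2; [auto|lra].
  - unfold e1. replace (L c1 (s_mul k c1 ts)) with (vscale c1 (L (s_one k) ts)).
    2: { rewrite lin_scale, sM_1r. reflexivity. }
    rewrite vnorm_scale. unfold c1. rewrite s_abs_R, Rabs_right. fold (fmin ts). fold n1. field. lra.
    left; apply Rdiv_lt_0_compat; lra.
  - unfold e2. rewrite lin_0b, vnorm_scale. unfold c2. rewrite s_abs_R, Rabs_right. fold n2. field. lra.
    left; apply Rdiv_lt_0_compat; lra.
  - intro s. assert (E : vadd e1 (vscale s e2) = vscale c1 (L (s_one k) (s_add k ts (s_mul k (s_of_R k n1) (s_mul k s c2))))).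
    { unfold e1, e2. rewrite !lin_scale, lin_add. f_equal.
      - rewrite sM_0r, sA_0r, sM_1r. reflexivity.
      - apply sc_HB. lra. }
    rewrite E, vnorm_scale. fold (fmin (s_add k ts (s_mul k (s_of_R k n1) (s_mul k s c2)))).
    pose proof (Hmin (s_add k ts (s_mul k (s_of_R k n1) (s_mul k s c2)))). fold n1 in H.
    unfold c1. rewrite s_abs_R, Rabs_right. 2: left; apply Rdiv_lt_0_compat; lra.
    apply Rle_trans with (1 / n1 * n1). right; field; lra.
    apply Rmult_le_compat_l; auto. left; apply Rdiv_lt_0_compat; lra.
  - intros x y [a [b Hx]] [a' [b' Hy]] Hsx Hsy Hne. apply HSC; auto.
    + rewrite Hx. change (in_span2 u v (lin k Y e1 e2 a b)). rewrite Hcomp. eexists; eexists; reflexivity.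
    + rewrite Hy. change (in_span2 u v (lin k Y e1 e2 a' b')). rewrite Hcomp. eexists; eexists; reflexivity.
Qed.
End Reduce.

Theorem mainTheorem15 (k : scalar_kind) (Y : BanachSpace k) :
  has_strictly_convex_2dim_subspace Y ->
  exists X : BanachSpace k, uniformly_convex X /\ ~ uniform_sBPBp X Y.
Proof.
  intros [u [v [Hind HSC]]].
  destruct (reduce k Y u v Hind HSC) as [e1 [e2 [Hind' [Hn1 [Hn2 [HB HSC']]]]]].
  exists (Build_BanachSpace k (XNS k Y e1 e2 Hind') (X_complete k Y e1 e2 Hind' Hn1 Hn2 HB)).
  split.
  - exact (X_uc k Y e1 e2 Hind' Hn1 Hn2 HB HSC').
  - exact (fail_sBPBp k Y e1 e2 Hind' Hn1 Hn2 HB HSC').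
Qed.
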